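(* If $S$ is an infinite meet-semilattice, then the lattice $Sub_\wedge(S)$ of meet-subsemilattices of $S$ (ordered by inclusion) contains a chain isomorphic to $\mathbb{Q}$. Consequently, $Sub_\wedge(S)$ is order-scattered if and only if $S$ is finite.
   Context: A poset is order-scattered if it contains no subset order-isomorphic to the chain $\mathbb{Q}$ of rationals. *)

(* Defs.v *)
From HB Require Import structures.
From mathcomp Require Import all_boot all_order all_algebra.
From mathcomp Require Import boolp classical_sets cardinality.
Set Implicit Arguments. Unset Strict Implicit. Unset Printing Implicit Defensive.
Import Order.TTheory GRing.Theory Num.Theory.
Local Open Scope classical_set_scope.

(* A subset of a meet-semilattice closed under binary meets
   (a meet-subsemilattice; the empty set is included). *)
Definition meet_closed (d : Order.disp_t) (S : meetSemilatticeType d) (A : set S) :=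
  forall x y, A x -> A y -> A (Order.meet x y).

Definition SubMeet (d : Order.disp_t) (S : meetSemilatticeType d) :=
  {A : set S | meet_closed A}.

Definition sub_le (d : Order.disp_t) (S : meetSemilatticeType d)
  (A B : SubMeet S) : Prop := proj1_sig A `<=` proj1_sig B.

Definition Q_embedding (T : Type) (le : T -> T -> Prop) (f : rat -> T) :=
  forall q r : rat, (q <= r)%R <-> le (f q) (f r).

Definition order_scattered (T : Type) (le : T -> T -> Prop) :=
  ~ exists f : rat -> T, Q_embedding le f.

(* Main.v *)
Require Import Defs.
From mathcomp Require Import all_boot all_order all_algebra.
From mathcomp Require Import boolp classical_sets cardinality.
From mathcomp Require Import functions.
Local Open Scope classical_set_scope.

Lemma inj_nat (T : Type) : ~ finite_set [set: T] -> exists y : nat -> T, injective y.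
Proof.
move=> /infiniteP/card_leP [f].
pose g : [set: nat] -> [set: T] := f.
exists (fun n => \val (g (@SigSub _ _ _ n (mem_set I)))).
move=> m n /val_inj H.
have := (inj (mem_set I) (mem_set I) H). by case.
Qed.

Lemma inj_nat_infinite (T : Type) (y : nat -> T) : injective y -> ~ finite_set [set: T].
Proof.
move=> yi fT; apply: infinite_nat.
have := @finite_preimage nat T [set: T] y (fun a b _ _ => @yi a b) fT.
by rewrite preimage_setT.
Qed.

Lemma incr (h : nat -> nat) : (forall i, (h i < h i.+1)%N) ->
  forall i j, (i < j)%N -> (h i < h j)%N.
Proof.
move=> H i; elim=> // j IH; rewrite ltnS leq_eqVlt => /orP[/eqP->//|/IH hij].
exact: ltn_trans hij (H j).
Qed.

Arguments incr {h} _ {i j} _.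

Definition unbounded (A : set nat) := forall n, exists m, (n < m)%N /\ A m.

Lemma enum_unbounded (B : set nat) : unbounded B ->
  exists h : nat -> nat, (forall i, (h i < h i.+1)%N) /\ forall i, B (h i).
Proof.
move=> /choice [sel Hsel].
pose h := fix h i := if i is i'.+1 then sel (h i') else sel 0%N.
exists h; split; first by move=> i; exact: (Hsel (h i)).1.
by case=> [|i]; [exact: (Hsel 0%N).2 | exact: (Hsel (h i)).2].
Qed.

Lemma ramsey (c : nat -> nat -> Prop) : exists g : nat -> nat,
  (forall i, (g i < g i.+1)%N) /\
  ((forall i j, (i < j)%N -> c (g i) (g j)) \/
   (forall i j, (i < j)%N -> ~ c (g i) (g j))).
Proof.
pose U := {A : set nat | unbounded A}.
have step : forall A : U, exists p : nat * bool * U,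
    proj1_sig A p.1.1 /\ forall m, proj1_sig p.2 m ->
      [/\ proj1_sig A m, (p.1.1 < m)%N & (c p.1.1 m <-> p.1.2)].
  move=> [A uA] /=.
  have [a [_ Aa]] := uA 0%N.
  have [ut|nut] := pselect (unbounded [set m | A m /\ (a < m)%N /\ c a m]).
    exists (a, true, exist _ _ ut) => /=; split => // m [Am [am cam]]; split => //.
  have uf : unbounded [set m | A m /\ (a < m)%N /\ ~ c a m].
    move: nut => /existsNP [n0 /forallNP H] n.
    have [m [lm Am]] := uA (maxn (maxn n n0) a).
    move: lm; rewrite !gtn_max => /andP[/andP[nm n0m] am].
    exists m; split => //; split => //; split => // cam.
    by apply: (H m); split => //.
  exists (a, false, exist _ _ uf) => /=; split => // m [Am [am cam]]; split => //.
have [st Hst] := choice step.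
have uT : unbounded [set: nat] by move=> n; exists n.+1.
pose s := fix s k := if k is k'.+1 then (st (s k')).2 else exist _ _ uT.
pose a k := (st (s k)).1.1.
pose b k := (st (s k)).1.2.
have sub : forall k l, (k <= l)%N -> proj1_sig (s l) `<=` proj1_sig (s k).
  move=> k; elim=> [|l IH]; first by rewrite leqn0 => /eqP->.
  rewrite leq_eqVlt => /orP[/eqP->//|]; rewrite ltnS => /IH kl m /= sm.
  apply: kl; by case: (Hst (s l)) => _ /(_ m sm) [].
have key : forall k l, (k < l)%N -> (a k < a l)%N /\ (c (a k) (a l) <-> b k).
  move=> k l kl.
  have al : proj1_sig (s (k.+1)) (a l).
    apply: (sub _ _ kl); by case: (Hst (s l)).
  by case: (Hst (s k)) => _ /(_ _ al) [].
have [ubt|nubt] := pselect (unbounded [set k | b k = true]).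
  have [h [hi hb]] := @enum_unbounded _ ubt.
  exists (fun i => a (h i)); split.
    by move=> i; case: (key _ _ (hi i)).
  left => i j ij; case: (key _ _ (incr hi ij)) => _ [_]; apply; exact: hb.
have ubf : unbounded [set k | b k = false].
  move: nubt => /existsNP [n0 /forallNP H] n.
  exists (maxn n n0).+1; split; first by rewrite ltnS leq_maxl.
  rewrite /=; case E: (b (maxn n n0).+1) => //; exfalso.
  apply: (H (maxn n n0).+1); split; last by [].
  by rewrite ltnS leq_maxr.
have [h [hi hb]] := @enum_unbounded _ ubf.
exists (fun i => a (h i)); split.
  by move=> i; case: (key _ _ (hi i)).
right => i j ij; case: (key _ _ (incr hi ij)) => _ [+ _] C.
by move=> /(_ C); rewrite hb.
Qed.

Import Order.TTheory GRing.Theory Num.Theory.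

Lemma gen_embed d (S : meetSemilatticeType d) (x : rat -> S)
  (Phi : set rat -> set S)
  (Hc : forall J, Defs.meet_closed (Phi J))
  (Hm : forall J K, J `<=` K -> Phi J `<=` Phi K)
  (Hx : forall J n, Phi J (x n) -> J n) (Hx' : forall J n, J n -> Phi J (x n)) :
  exists f : rat -> SubMeet S, Q_embedding (@sub_le d S) f.
Proof.
exists (fun q => exist _ (Phi [set t | (t < q)%R]) (Hc _)) => q r; split.
  by move=> qr; apply: Hm => t /= tq; exact: lt_le_trans tq qr.
rewrite /sub_le /= => H; rewrite leNgt; apply/negP => rq.
have := Hx _ _ (H _ (Hx' [set t | (t < q)%R] r rq)).
by rewrite /= ltxx.
Qed.

Lemma infinite_embed d (S : meetSemilatticeType d) : ~ finite_set [set: S] ->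
  exists f : rat -> SubMeet S, Q_embedding (@sub_le d S) f.
Proof.
move=> /inj_nat [y yi].
have [g [gi H]] := ramsey (fun i j => (Order.le (y i) (y j)) \/ (Order.le (y j) (y i))).
have pickle_inj : injective (@pickle rat) := pcan_inj pickleK.
pose x (q : rat) := y (g (pickle q)).
have ginj : injective g.
  move=> i j E; case: (ltngtP i j) => // ij.
    by move: (incr gi ij); rewrite E ltnn.
  by move: (incr gi ij); rewrite E ltnn.
have xi : injective x by move=> q r /yi /ginj /pickle_inj.
case: H => H.
  have cmp : forall q r, q <> r -> Order.le (x q) (x r) \/ Order.le (x r) (x q).
    move=> q r qr; case: (ltngtP (pickle q) (pickle r)) => l.
    - exact: H.
    - by case: (H _ _ l); [right|left].
    - by case: qr; apply: pickle_inj.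
  apply: (@gen_embed d S x (fun J => [set z | exists t, J t /\ z = x t])).
  - move=> J z1 z2 [t1 [J1 ->]] [t2 [J2 ->]].
    case: (pselect (t1 = t2)) => [->|ne]; first by exists t2; rewrite meetxx.
    case: (cmp _ _ ne) => le; [exists t1; rewrite (meet_l le) | exists t2; rewrite (meet_r le)]; by [].
  - by move=> J K JK z [t [Jt ->]]; exists t; split => //; apply: JK.
  - by move=> J n [t [Jt /xi ->]].
  - by move=> J n Jn; exists n.
have incmp : forall q r, q <> r -> ~ Order.le (x q) (x r).
  move=> q r qr le; case: (ltngtP (pickle q) (pickle r)) => l.
  - by apply: (H _ _ l); left.
  - by apply: (H _ _ l); right.
  - by case: qr; apply: pickle_inj.
apply: (@gen_embed d S x (fun J => [set z | exists t, J t /\ Order.le z (x t)])).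
- move=> J z1 z2 [t1 [J1 le1]] _; exists t1; split => //.
  exact: le_trans (leIl _ _) le1.
- by move=> J K JK z [t [Jt le]]; exists t; split => //; apply: JK.
- move=> J n [t [Jt le]]; case: (pselect (n = t)) => [->//|ne].
  by exfalso; exact: incmp ne le.
- by move=> J n Jn; exists n.
Qed.

Lemma finite_scattered d (S : meetSemilatticeType d) : finite_set [set: S] ->
  order_scattered (@sub_le d S).
Proof.
move=> fS [f fe].
have step : forall n : nat, exists z,
    proj1_sig (f (n.+1%:R : rat)%R) z /\ ~ proj1_sig (f (n%:R : rat)%R) z.
  move=> n.
  have : ~ sub_le (f (n.+1%:R : rat)%R) (f (n%:R : rat)%R).
    by rewrite -fe ler_nat ltnn.
  by move=> /existsNP [z /not_implyP]; exists z.
have [z Hz] := choice step.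
apply: (@inj_nat_infinite _ z) fS.
have key : forall m n, (m < n)%N -> z m <> z n.
  move=> m n mn E; case: (Hz n) => _; apply; rewrite -E.
  have : sub_le (f (m.+1%:R : rat)%R) (f (n%:R : rat)%R) by rewrite -fe ler_nat.
  apply; exact: (Hz m).1.
move=> m n E; case: (ltngtP m n) => // mn.
  by case: (key _ _ mn).
by case: (key _ _ mn).
Qed.

Theorem theorem6p1 (d : Order.disp_t) (S : meetSemilatticeType d) :
  (~ finite_set [set: S] ->
     exists f : rat -> SubMeet S, Q_embedding (@sub_le d S) f) /\
  (order_scattered (@sub_le d S) <-> finite_set [set: S]).
Proof.
split; first exact: infinite_embed.
split; last exact: finite_scattered.
move=> sc; apply: contrapT => nf; apply: sc; exact: infinite_embed nf.
Qed.
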